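(* Let $\widehat G\in\mathbb{C}^{2\times 2}$ and $\widehat J=\mathrm{diag}(j_{11},j_{22})$ with $j_{11},j_{22}\in\{1,-1\}$. Then there exist a unitary $\check U\in\mathbb{C}^{2\times2}$ and a matrix $\check V\in\mathbb{C}^{2\times 2}$ that is both unitary and $\widehat J$-unitary ($\check V^\ast\widehat J\check V=\widehat J$) such that $\widehat T=\check U^\ast\widehat G\check V$ is real with non-negative entries and: (i) if $\widehat J=\pm I_2$, or if $\widehat J$ is indefinite and the first column of $\widehat G$ has Frobenius norm at least that of the second column, then $\widehat T$ is upper triangular with $\hat t_{11}^2\ge\hat t_{12}^2+\hat t_{22}^2$; (ii) if $\widehat J$ is indefinite and the first column of $\widehat G$ has strictly smaller Frobenius norm than the second, then $\widehat T$ is lower triangular with $\hat t_{22}^2\ge\hat t_{21}^2+\hat t_{11}^2$.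
   Context: This is the $2\times 2$ $\widehat J$-UTV factorization. A matrix $V$ is $\widehat J$-unitary if $V^\ast\widehat J V=\widehat J$. *)

(* Defs.v *)
(* Complex numbers are modelled by an arbitrary
   numClosedFieldType C. *)
From HB Require Import structures.
From mathcomp Require Import all_boot all_order all_algebra.
Set Implicit Arguments. Unset Strict Implicit. Unset Printing Implicit Defensive.
Import Order.TTheory GRing.Theory Num.Theory.
Local Open Scope ring_scope.

Definition ctrmx (C : numClosedFieldType) (m n : nat) (A : 'M[C]_(m, n)) : 'M[C]_(n, m) :=
  (map_mx Num.conj A)^T.

Definition unitary_mx (C : numClosedFieldType) (n : nat) (U : 'M[C]_n) : Prop :=
  ctrmx U *m U = 1%:M.

Definition J_unitary_mx (C : numClosedFieldType) (n : nat) (J V : 'M[C]_n) : Prop :=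
  ctrmx V *m J *m V = J.

Definition Jhat (C : numClosedFieldType) (j11 j22 : C) : 'M[C]_2 :=
  \matrix_(i < 2, j < 2) (if i == j then (if i == 0 then j11 else j22) else 0).

Definition col_norm2 (C : numClosedFieldType) (G : 'M[C]_2) (k : 'I_2) : C :=
  \sum_(i < 2) `|G i k| ^+ 2.

(* Main.v *)
Require Import Defs.
From HB Require Import structures.
From mathcomp Require Import all_boot all_order all_algebra.
From mathcomp Require Import ring.
Import Order.TTheory GRing.Theory Num.Theory.
Local Open Scope ring_scope.

Section M2.
Variable C : numClosedFieldType.
Definition mk2 (x y z w : C) : 'M[C]_2 :=
  \matrix_(i < 2, j < 2) if i == 0 then (if j == 0 then x else y) else (if j == 0 then z else w).

Lemma mk2E x y z w : (mk2 x y z w 0 0 = x) * (mk2 x y z w 0 1 = y) *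
   (mk2 x y z w 1 0 = z) * (mk2 x y z w 1 1 = w).
Proof. by rewrite !mxE. Qed.

Lemma mk2_eta (A : 'M[C]_2) : A = mk2 (A 0 0) (A 0 1) (A 1 0) (A 1 1).
Proof. apply/matrixP=> i j; rewrite !mxE; case: i => [[|[|]]] //= ?; case: j => [[|[|]]] //= ?;
  by congr (A _ _); apply/val_inj. Qed.

Lemma sum2 (F : 'I_2 -> C) : \sum_(i < 2) F i = F 0 + F 1.
Proof. by rewrite !big_ord_recr big_ord0 /= add0r; congr (F _ + F _); apply/val_inj. Qed.

Lemma mul_mk2 a b c d e f g h :
  mk2 a b c d *m mk2 e f g h = mk2 (a*e + b*g) (a*f+b*h) (c*e+d*g) (c*f+d*h).
Proof. apply/matrixP=> i j; rewrite !mxE sum2 !mxE.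
  by case: i => [[|[|]]] //= ?; case: j => [[|[|]]] //= ?. Qed.

Lemma ctr_mk2 x y z w : ctrmx (mk2 x y z w) = mk2 x^* z^* y^* w^*.
Proof. apply/matrixP=> i j; rewrite !mxE.
  by case: i => [[|[|]]] //= ?; case: j => [[|[|]]] //= ?. Qed.

Lemma one_mk2 : 1%:M = mk2 1 0 0 1 :> 'M[C]_2.
Proof. apply/matrixP=> i j; rewrite !mxE.
  by case: i => [[|[|]]] //= ?; case: j => [[|[|]]] //= ?. Qed.

Lemma Jhat_mk2 j1 j2 : Jhat j1 j2 = mk2 j1 0 0 j2.
Proof. apply/matrixP=> i j; rewrite !mxE.
  by case: i => [[|[|]]] //= ?; case: j => [[|[|]]] //= ?. Qed.

Lemma mk2_eq x y z w x' y' z' w' : x = x' -> y = y' -> z = z' -> w = w' ->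
  mk2 x y z w = mk2 x' y' z' w'.
Proof. by move=> -> -> -> ->. Qed.

Lemma col_norm2E (G : 'M[C]_2) k : col_norm2 G k = `|G 0 k|^+2 + `|G 1 k|^+2.
Proof. by rewrite /col_norm2 sum2. Qed.
End M2.
Arguments mk2 {C}.
Section Core.
Variable C : numClosedFieldType.
Definition sgnC (z : C) : C := if z == 0 then 1 else z / `|z|.

Lemma sgnC_unit z : (sgnC z)^* * sgnC z = 1.
Proof. rewrite /sgnC; case: eqP => [_|/eqP nz]; first by rewrite rmorph1 mulr1.
have nz' : `|z| != 0 by rewrite normr_eq0.
rewrite rmorphM fmorphV /= conj_normC mulrACA -normCKC expr2 -invfM divff //.
by rewrite mulf_neq0. Qed.

Lemma sgnC_norm z : (sgnC z)^* * z = `|z|.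
Proof. rewrite /sgnC; case: eqP => [->|/eqP nz]; first by rewrite normr0 mulr0.
have nz' : `|z| != 0 by rewrite normr_eq0.
rewrite rmorphM fmorphV /= conj_normC mulrAC -normCKC expr2 -mulrA divff // mulr1 //. Qed.

Lemma nneg_conj (x : C) : 0 <= x -> x^* = x.
Proof. by move=> h; apply: conj_Creal; apply: ger0_real. Qed.
Lemma core (a1 a2 b1 b2 : C) : exists u11 u12 u21 u22 d : C,
  [/\ u11^* * u11 + u21^* * u21 = 1, u11^* * u12 + u21^* * u22 = 0,
      u12^* * u11 + u22^* * u21 = 0, u12^* * u12 + u22^* * u22 = 1 & d^* * d = 1] /\
  [/\ 0 <= u11^* * a1 + u21^* * a2, u12^* * a1 + u22^* * a2 = 0,
      0 <= (u11^* * b1 + u21^* * b2) * d & [/\ 0 <= (u12^* * b1 + u22^* * b2) * d,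
      (u11^* * a1 + u21^* * a2)^+2 = `|a1|^+2 + `|a2|^+2 &
      ((u11^* * b1 + u21^* * b2) * d)^+2 + ((u12^* * b1 + u22^* * b2) * d)^+2
        = `|b1|^+2 + `|b2|^+2]].
Proof.
have [p1 [p2 [np0 [h2 [h1 h3]]]]] : exists p1 p2 : C, p1 * p1^* + p2 * p2^* != 0 /\
   p2 * a1 = p1 * a2 /\ 0 <= p1^* * a1 + p2^* * a2 /\
   (p1^* * a1 + p2^* * a2)^+2 = (`|a1|^+2 + `|a2|^+2) * (p1 * p1^* + p2 * p2^*).
  case: (boolP ((a1 == 0) && (a2 == 0))) => [/andP[/eqP-> /eqP->]|ha].
    exists 1, 0; rewrite !rmorph0 rmorph1 normr0 !(mulr0, mul0r, addr0, mulr1, mul1r, expr0n).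
    by rewrite oner_neq0 lexx.
  exists a1, a2; rewrite -!normCK -!normCKC; split; last split; first 1 last.
  - by rewrite mulrC.
  - split; first by rewrite addr_ge0 // exprn_ge0.
    by rewrite expr2.
  rewrite paddr_eq0 ?exprn_ge0 // !expf_eq0 /= !normr_eq0.
  by [].  
set np := p1 * p1^* + p2 * p2^*.
have np_ge0 : 0 <= np by rewrite /np -!normCK addr_ge0 // exprn_ge0.
set r := sqrtC np.
have r0 : 0 < r by rewrite sqrtC_gt0 lt_def np0.
have rnz : r != 0 by rewrite gt_eqF.
have rc : r^* = r by apply: nneg_conj; apply: ltW.
have r2 : r^+2 = np by rewrite sqrtCK.
have r2nz : r^+2 != 0 by rewrite expf_neq0.
set w1 := (p1^* * b1 + p2^* * b2) / r.
set w2 := (- p2 * b1 + p1 * b2) / r.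
set d := (sgnC w1)^*.
set e := sgnC (w2 * d).
have dd : d^* * d = 1 by rewrite /d conjCK mulrC sgnC_unit.
have ee : e^* * e = 1 by rewrite sgnC_unit.
exists (p1/r), (- p2^* * e / r), (p2/r), (p1^* * e / r), d.
rewrite !(rmorphM, rmorphN, fmorphV) /= rc !conjCK.
have t01 : (p1^* / r * b1 + p2^* / r * b2) * d = `|w1|.
  rewrite -sgnC_norm -/d; rewrite /w1; field; done.
have t11 : (- p2 * e^* / r * b1 + p1 * e^* / r * b2) * d = `|w2 * d|.
  rewrite -sgnC_norm -/e; rewrite /w2; field; done.
split; split.
- transitivity (np / r^+2); first by rewrite /np; field.
  by rewrite r2 divff.
- by field.
- by field.
- transitivity (e^* * e * np / r^+2); first by rewrite /np; field.
  by rewrite ee mul1r r2 divff.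
- by rewrite /d mulrC sgnC_unit.
- rewrite (_ : p1^* / r * a1 + p2^* / r * a2 = (p1^* * a1 + p2^* * a2) / r); last by field.
  by rewrite divr_ge0 // ltW.
- transitivity (e^* * (p1 * a2 - p2 * a1) / r); first by field.
  by rewrite h2 subrr mulr0 mul0r.
- by rewrite t01.
split.
- by rewrite t11.
- transitivity ((p1^* * a1 + p2^* * a2)^+2 / r^+2); first by field.
  by rewrite h3 r2 mulfK.
rewrite t01 t11 (normrM w2) exprMn (normCKC d) dd mulr1 !normCK.
rewrite /w1 /w2 !(rmorphM, rmorphN, rmorphD, fmorphV) /= rc !conjCK.
transitivity ((b1 * b1^* + b2 * b2^*) * np / r^+2); first by rewrite /np; field.
by rewrite r2 mulfK.
Qed.
End Core.
Arguments sgnC {C}.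
Arguments core {C}.

Theorem mainTheorem7 (C : numClosedFieldType) (G : 'M[C]_2) (j11 j22 : C)
  (hj11 : j11 = 1 \/ j11 = -1) (hj22 : j22 = 1 \/ j22 = -1) :
  exists (U V : 'M[C]_2),
    unitary_mx U /\ unitary_mx V /\ J_unitary_mx (Jhat j11 j22) V /\
    let T := ctrmx U *m G *m V in
    (forall i j, 0 <= T i j) /\
    ((j11 = j22 \/ (j11 <> j22 /\ col_norm2 G 1 <= col_norm2 G 0)) ->
       T 1 0 = 0 /\ T 1 1 ^+ 2 + T 0 1 ^+ 2 <= T 0 0 ^+ 2) /\
    ((j11 <> j22 /\ col_norm2 G 0 < col_norm2 G 1) ->
       T 0 1 = 0 /\ T 1 0 ^+ 2 + T 0 0 ^+ 2 <= T 1 1 ^+ 2).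
Proof.
have nneg_entries : forall (x y z w : C), 0 <= x -> 0 <= y -> 0 <= z -> 0 <= w ->
   forall i j, 0 <= mk2 x y z w i j.
  by move=> x y z w hx hy hz hw i j; rewrite mxE; case: ifP => _; case: ifP.
rewrite !col_norm2E.
rewrite [G]mk2_eta !mk2E.
set a1 := G 0 0; set b1 := G 0 1; set a2 := G 1 0; set b2 := G 1 1.
have real_n : forall x y : C, `|x|^+2 + `|y|^+2 \is Num.real.
  by move=> x y; apply: ger0_real; rewrite addr_ge0 // exprn_ge0.
case: (boolP (`|b1|^+2 + `|b2|^+2 <= `|a1|^+2 + `|a2|^+2)) => hc.
  have [u11 [u12 [u21 [u22 [d [[U1 U2 U3 U4 dd] [T1 T2 T3 [T4 T5 T6]]]]]]]] := core a1 a2 b1 b2.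
  exists (mk2 u11 u12 u21 u22), (mk2 1 0 0 d).
  split; [|split; [|split]].
  - by rewrite /unitary_mx ctr_mk2 mul_mk2 one_mk2 U1 U2 U3 U4.
  - rewrite /unitary_mx ctr_mk2 mul_mk2 one_mk2 rmorph0 rmorph1 dd.
    by apply: mk2_eq; ring.
  - rewrite /J_unitary_mx Jhat_mk2 ctr_mk2 !mul_mk2 rmorph0 rmorph1.
    by apply: mk2_eq; rewrite ?(mulr0, mul0r, mulr1, mul1r, addr0, add0r) // mulrAC dd mul1r.
  move=> T.
  have -> : T = mk2 (u11^* * a1 + u21^* * a2) ((u11^* * b1 + u21^* * b2) * d)
      (u12^* * a1 + u22^* * a2) ((u12^* * b1 + u22^* * b2) * d).
    by rewrite /T ctr_mk2 !mul_mk2; apply: mk2_eq; ring.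
  rewrite !mk2E T2; split; first by apply: nneg_entries.
  split.
    by move=> _; split => //; rewrite addrC T6 T5.
  by case=> _ hlt; move: hc; rewrite lt_geF.
have hlt : `|a1|^+2 + `|a2|^+2 < `|b1|^+2 + `|b2|^+2 by rewrite real_ltNge.
have [u11 [u12 [u21 [u22 [d [[U1 U2 U3 U4 dd] [T1 T2 T3 [T4 T5 T6]]]]]]]] := core b1 b2 a1 a2.
case: (eqVneq j11 j22) => hj.
  exists (mk2 u11 u12 u21 u22), (mk2 0 d 1 0).
  split; [|split; [|split]].
  - by rewrite /unitary_mx ctr_mk2 mul_mk2 one_mk2 U1 U2 U3 U4.
  - rewrite /unitary_mx ctr_mk2 mul_mk2 one_mk2 rmorph0 rmorph1.
    apply: mk2_eq; rewrite ?(mulr0, mul0r, mulr1, mul1r, addr0, add0r) //.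
  - rewrite /J_unitary_mx Jhat_mk2 ctr_mk2 !mul_mk2 rmorph0 rmorph1 hj.
    by apply: mk2_eq; rewrite ?(mulr0, mul0r, mulr1, mul1r, addr0, add0r) // mulrAC dd mul1r.
  move=> T.
  have -> : T = mk2 (u11^* * b1 + u21^* * b2) ((u11^* * a1 + u21^* * a2) * d)
      (u12^* * b1 + u22^* * b2) ((u12^* * a1 + u22^* * a2) * d).
    by rewrite /T ctr_mk2 !mul_mk2; apply: mk2_eq; ring.
  rewrite !mk2E T2; split; first by apply: nneg_entries.
  split.
    by move=> _; split => //; rewrite addrC T6 T5 ltW.
  by case.
exists (mk2 u12 u11 u22 u21), (mk2 d 0 0 1).
split; [|split; [|split]].
- by rewrite /unitary_mx ctr_mk2 mul_mk2 one_mk2 U1 U2 U3 U4.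
- rewrite /unitary_mx ctr_mk2 mul_mk2 one_mk2 rmorph0 rmorph1 dd.
  by apply: mk2_eq; ring.
- rewrite /J_unitary_mx Jhat_mk2 ctr_mk2 !mul_mk2 rmorph0 rmorph1.
  by apply: mk2_eq; rewrite ?(mulr0, mul0r, mulr1, mul1r, addr0, add0r) // mulrAC dd mul1r.
move=> T.
have -> : T = mk2 ((u12^* * a1 + u22^* * a2) * d) (u12^* * b1 + u22^* * b2)
    ((u11^* * a1 + u21^* * a2) * d) (u11^* * b1 + u21^* * b2).
  by rewrite /T ctr_mk2 !mul_mk2; apply: mk2_eq; ring.
rewrite !mk2E T2; split; first by apply: nneg_entries.
split.
  case=> [/eqP|[_ hc']]; first by rewrite (negbTE hj).
  by [].  
by move=> _; split => //; rewrite T6 T5 ltW.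
Qed.
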